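(* Let $D\subseteq\mathbb{R}^3\setminus\{0\}$ be open, $\Omega=\mathbb{R}^3\times D$, and let $\vec\mu(\vec M,\vec\gamma)=\vec\nu(\vec\gamma,\vec M\cdot\vec\gamma)$ with $\vec\nu:D\times\mathbb{R}\to\mathbb{R}^3$ smooth. A smooth function $C:\Omega\to\mathbb{R}$ satisfies $\Pi_{\vec\mu}\nabla C=0$ on $\Omega$ (i.e. $C$ is a Casimir function of $\Pi_{\vec\mu}$) if and only if there is a smooth $F:D\times\mathbb{R}\to\mathbb{R}$ with $C(\vec M,\vec\gamma)=F(\vec\gamma,\vec M\cdot\vec\gamma)$ and $$\vec\gamma\times\big((\partial_sF)(\vec\gamma,s)\,\vec\nu(\vec\gamma,s)-\nabla_{\vec\gamma}F(\vec\gamma,s)\big)=\vec 0\quad\text{for all }(\vec\gamma,s)\in D\times\mathbb{R},$$ where $\nabla_{\vec\gamma}F$ is the gradient in $\vec\gamma$ with $s$ held fixed. In particular $C_1=\tfrac12|\vec\gamma|^2$ is always a Casimir function of $\Pi_{\vec\mu}$.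
   Context: Coordinates on $\mathbb{R}^6$ are $(\vec M,\vec\gamma)=(M_1,M_2,M_3,\gamma_1,\gamma_2,\gamma_3)$. For a smooth $\vec\mu=(\mu_1,\mu_2,\mu_3)$ of $(\vec M,\vec\gamma)$, $\Pi_{\vec\mu}$ is the skew-symmetric $6\times6$ matrix $$\Pi_{\vec\mu}=\begin{bmatrix}0&-M_3-\mu_3&M_2+\mu_2&0&-\gamma_3&\gamma_2\\ M_3+\mu_3&0&-M_1-\mu_1&\gamma_3&0&-\gamma_1\\ -M_2-\mu_2&M_1+\mu_1&0&-\gamma_2&\gamma_1&0\\ 0&-\gamma_3&\gamma_2&0&0&0\\ \gamma_3&0&-\gamma_1&0&0&0\\ -\gamma_2&\gamma_1&0&0&0&0\end{bmatrix},$$ and $\{f,g\}_{\vec\mu}=(\nabla f)^T\Pi_{\vec\mu}\nabla g$ for smooth $f,g$ (gradient in all six variables). *)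

(* Defs.v *)
From Stdlib Require Import Reals.
From mathcomp Require Import ssreflect ssrbool eqtype ssrnat fintype.
Open Scope R_scope.

Definition pt (n : nat) := 'I_n -> R.

Definition upd {n} (x : pt n) (i : 'I_n) (t : R) : pt n :=
  fun j => if j == i then t else x j.

Definition is_open {n} (U : pt n -> Prop) : Prop :=
  forall x, U x -> exists d, d > 0 /\
    forall y : pt n, (forall i, Rabs (y i - x i) < d) -> U y.

Definition cont_on {n} (U : pt n -> Prop) (f : pt n -> R) : Prop :=
  forall x, U x -> forall eps, eps > 0 -> exists d, d > 0 /\
    forall y, U y -> (forall i, Rabs (y i - x i) < d) -> Rabs (f y - f x) < eps.

Definition partial_is {n} (f : pt n -> R) (i : 'I_n) (x : pt n) (l : R) : Prop :=
  derivable_pt_lim (fun t => f (upd x i t)) (x i) l.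

Fixpoint Ck {n} (k : nat) (U : pt n -> Prop) (f : pt n -> R) : Prop :=
  match k with
  | O => cont_on U f
  | S k' => cont_on U f /\
      forall i : 'I_n, exists g : pt n -> R,
        (forall x, U x -> partial_is f i x (g x)) /\ Ck k' U g
  end.

Definition smooth_on {n} (U : pt n -> Prop) (f : pt n -> R) : Prop :=
  forall k, Ck k U f.

Definition v3 (a b c : R) : pt 3 :=
  fun i => match nat_of_ord i with 0%nat => a | 1%nat => b | _ => c end.
Definition c0 (v : pt 3) : R := v (inord 0).
Definition c1 (v : pt 3) : R := v (inord 1).
Definition c2 (v : pt 3) : R := v (inord 2).
Definition dot3 (a b : pt 3) : R := c0 a * c0 b + c1 a * c1 b + c2 a * c2 b.
Definition cross3 (a b : pt 3) : pt 3 :=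
  v3 (c1 a * c2 b - c2 a * c1 b) (c2 a * c0 b - c0 a * c2 b) (c0 a * c1 b - c1 a * c0 b).

Definition M_of (x : pt 6) : pt 3 := v3 (x (inord 0)) (x (inord 1)) (x (inord 2)).
Definition gam_of (x : pt 6) : pt 3 := v3 (x (inord 3)) (x (inord 4)) (x (inord 5)).

Definition gam4 (y : pt 4) : pt 3 := v3 (y (inord 0)) (y (inord 1)) (y (inord 2)).
Definition s4 (y : pt 4) : R := y (inord 3).
Definition join4 (g : pt 3) (s : R) : pt 4 :=
  fun j => match nat_of_ord j with
           | 0%nat => c0 g | 1%nat => c1 g | 2%nat => c2 g | _ => s end.

Definition Pi (M g mu : pt 3) (i j : 'I_6) : R :=
  let m1 := c0 M + c0 mu in let m2 := c1 M + c1 mu in let m3 := c2 M + c2 mu in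
  let g1 := c0 g in let g2 := c1 g in let g3 := c2 g in
  match nat_of_ord i, nat_of_ord j with
  | 0, 1 => - m3 | 0, 2 => m2 | 0, 4 => - g3 | 0, 5 => g2
  | 1, 0 => m3 | 1, 2 => - m1 | 1, 3 => g3 | 1, 5 => - g1
  | 2, 0 => - m2 | 2, 1 => m1 | 2, 3 => - g2 | 2, 4 => g1
  | 3, 1 => - g3 | 3, 2 => g2
  | 4, 0 => g3 | 4, 2 => - g1
  | 5, 0 => - g2 | 5, 1 => g1
  | _, _ => 0%R
  end%nat.

Definition mulv6 (P : 'I_6 -> 'I_6 -> R) (v : pt 6) (i : 'I_6) : R :=
  P i (inord 0) * v (inord 0) + P i (inord 1) * v (inord 1)
  + P i (inord 2) * v (inord 2) + P i (inord 3) * v (inord 3)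
  + P i (inord 4) * v (inord 4) + P i (inord 5) * v (inord 5).

Definition mu_of (nu : pt 4 -> pt 3) (x : pt 6) : pt 3 :=
  nu (join4 (gam_of x) (dot3 (M_of x) (gam_of x))).

Definition Omega (D : pt 3 -> Prop) (x : pt 6) : Prop := D (gam_of x).
Definition DxR (D : pt 3 -> Prop) (y : pt 4) : Prop := D (gam4 y).

Definition casimir (D : pt 3 -> Prop) (nu : pt 4 -> pt 3) (C : pt 6 -> R) : Prop :=
  forall x, Omega D x -> forall gradC : pt 6,
    (forall i, partial_is C i x (gradC i)) ->
    forall i, mulv6 (Pi (M_of x) (gam_of x) (mu_of nu x)) gradC i = 0.

(* Main.v *)
Require Import Defs.
From Stdlib Require Import Reals.
From mathcomp Require Import ssreflect ssrbool eqtype ssrnat fintype.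
Open Scope R_scope.
From Stdlib Require Import Lra FunctionalExtensionality IndefiniteDescription.
Require Import Defs.
Open Scope R_scope.



Lemma dpl_local (f g : R -> R) x l d : d > 0 ->
  (forall t, Rabs (t - x) < d -> f t = g t) ->
  derivable_pt_lim f x l -> derivable_pt_lim g x l.
Proof.
move=> hd hfg H eps he. case: (H eps he) => del Hd.
have hm : 0 < Rmin del d by apply Rmin_pos; [apply cond_pos | lra].
exists (mkposreal _ hm) => h hh0 hh /=.
have hh1 : Rabs h < del by apply: Rlt_le_trans hh (Rmin_l _ _).
have hh2 : Rabs h < d by apply: Rlt_le_trans hh (Rmin_r _ _).
rewrite -!hfg; first by apply Hd.
- by rewrite Rminus_diag Rabs_R0.
- by replace (x + h - x) with h by ring.
Qed.

Definition dlin (f : R -> R) x l := forall eps, eps > 0 -> exists d, d > 0 /\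
  forall h, Rabs h < d -> Rabs (f (x + h) - f x - l * h) <= eps * Rabs h.

Lemma dpl_dlin f x l : derivable_pt_lim f x l -> dlin f x l.
Proof.
move=> H eps he. case: (H eps he) => del Hd. exists del; split; first by apply cond_pos.
move=> h hh. case: (Req_dec h 0) => [->|h0].
  rewrite Rabs_R0 Rplus_0_r. replace (f x - f x - l * 0) with 0 by ring. rewrite Rabs_R0; lra.
have := Hd h h0 hh.
replace (f (x + h) - f x - l * h) with (h * ((f (x + h) - f x) / h - l)) by (field; auto).
rewrite Rabs_mult => H1. have := Rabs_pos_lt h h0. nra.
Qed.

Lemma dlin_dpl f x l : dlin f x l -> derivable_pt_lim f x l.
Proof.
move=> H eps he. have he2 : eps / 2 > 0 by lra.
case: (H _ he2) => d [hd Hd]. exists (mkposreal _ hd) => h h0 hh /=.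
have := Hd h hh.
replace (f (x + h) - f x - l * h) with (h * ((f (x + h) - f x) / h - l)) by (field; auto).
rewrite Rabs_mult => H1. have := Rabs_pos_lt h h0. 
have := Rabs_pos ((f (x + h) - f x) / h - l). nra.
Qed.

Fixpoint sm (k : nat) (f : nat -> R) : R :=
  match k with O => 0 | S k' => sm k' f + f k' end.

Lemma sm_ext k f g : (forall i, (i < k)%N -> f i = g i) -> sm k f = sm k g.
Proof.
elim: k => [|k IH] H //=. rewrite IH ?H // => i hi; apply H; exact: ltnW.
Qed.
Lemma sm_plus k f g : sm k (fun i => f i + g i) = sm k f + sm k g.
Proof. elim: k => [|k IH] /=; [ring| rewrite IH; ring]. Qed.
Lemma sm_scal k c f : sm k (fun i => c * f i) = c * sm k f.
Proof. elim: k => [|k IH] /=; [ring| rewrite IH; ring]. Qed.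
Lemma sm_abs k f : Rabs (sm k f) <= sm k (fun i => Rabs (f i)).
Proof.
elim: k => [|k IH] /=; first by rewrite Rabs_R0; lra.
apply: Rle_trans (Rabs_triang _ _) _. lra.
Qed.
Lemma sm_le k f g : (forall i, (i < k)%N -> f i <= g i) -> sm k f <= sm k g.
Proof.
elim: k => [|k IH] H /=; first lra.
have := H k (ltnSn k). have : sm k f <= sm k g by apply IH => i hi; apply H; exact: ltnW.
lra.
Qed.
Lemma sm_term k f i : (forall j, (j < k)%N -> 0 <= f j) -> (i < k)%N -> f i <= sm k f.
Proof.
elim: k => [|k IH] // H hi /=.
have h0 : 0 <= sm k f.
  have := sm_le k (fun _ => 0) f. have -> : sm k (fun _ => 0) = 0.
    by elim: k {IH H hi} => //= k ->; ring.
  move=> h; apply h => j hj; apply H; exact: ltnW.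
rewrite ltnS leq_eqVlt in hi. case/orP: hi => [/eqP ->|hi].
- lra.
- have := IH (fun j hj => H j (ltnW hj)) hi. have := H k (ltnSn k). lra.
Qed.
Lemma sm_nonneg k f : (forall j, (j < k)%N -> 0 <= f j) -> 0 <= sm k f.
Proof.
move=> H. have := sm_le k (fun _ => 0) f. have -> : sm k (fun _ => 0) = 0.
  by elim: k {H} => //= k ->; ring.
by apply.
Qed.

Lemma fin_delta (n : nat) (P : nat -> R -> Prop) :
  (forall i d d', 0 < d' <= d -> P i d -> P i d') ->
  (forall i, (i < n)%N -> exists d, d > 0 /\ P i d) ->
  exists d, d > 0 /\ forall i, (i < n)%N -> P i d.
Proof.
move=> Hm. elim: n => [|n IH] H.
  exists 1; split; [lra| by []].
case: IH => [i hi|d [hd Hd]]; first by apply H; exact: ltnW.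
case: (H n (ltnSn n)) => d' [hd' Hd'].
exists (Rmin d d'); split; first by apply Rmin_pos.
move=> i. rewrite ltnS leq_eqVlt. case/orP => [/eqP ->|hi].
- apply: Hm Hd'. split; [by apply Rmin_pos| apply Rmin_r].
- apply: Hm (Hd i hi). split; [by apply Rmin_pos| apply Rmin_l].
Qed.



Lemma upd_upd n (x : pt n) i s t : upd (upd x i s) i t = upd x i t.
Proof. apply functional_extensionality => j; rewrite /upd; by case: (j == i). Qed.
Lemma upd_same n (x : pt n) i t : upd x i t i = t.
Proof. by rewrite /upd eqxx. Qed.
Lemma upd_id n (x : pt n) i : upd x i (x i) = x.
Proof. apply functional_extensionality => j; rewrite /upd; by case: eqP => // ->. Qed.

Lemma mvt_bound (f f' : R -> R) a b L eps :
  (forall c, Rmin a b <= c <= Rmax a b -> derivable_pt_lim f c (f' c)) ->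
  (forall c, Rmin a b <= c <= Rmax a b -> Rabs (f' c - L) <= eps) ->
  Rabs (f b - f a - L * (b - a)) <= eps * Rabs (b - a).
Proof.
move=> Hd Hb. case: (Rtotal_order a b) => [hab|[hab|hab]].
- have [c [e hc]] : exists c, f b - f a = f' c * (b - a) /\ a < c < b.
    apply MVT_cor2 => // c hc; apply Hd. rewrite Rmin_left ?Rmax_right; lra.
  rewrite e. replace (f' c * (b - a) - L * (b - a)) with ((f' c - L) * (b - a)) by ring.
  rewrite Rabs_mult. apply Rmult_le_compat_r; first by apply Rabs_pos.
  apply Hb. rewrite Rmin_left ?Rmax_right; lra.
- subst. rewrite !Rminus_diag Rabs_R0. replace (0 - L * 0) with 0 by ring. rewrite Rabs_R0; lra.
- have [c [e hc]] : exists c, f a - f b = f' c * (a - b) /\ b < c < a.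
    apply MVT_cor2 => // c hc; apply Hd. rewrite Rmin_right ?Rmax_left; lra.
  replace (f b - f a - L * (b - a)) with (- ((f' c - L) * (a - b))) by lra.
  rewrite Rabs_Ropp Rabs_mult (Rabs_minus_sym b a). apply Rmult_le_compat_r; first by apply Rabs_pos.
  apply Hb. rewrite Rmin_right ?Rmax_left; lra.
Qed.

Definition mixp {n} (a b : pt n.+1) (k : nat) : pt n.+1 :=
  fun j => if (nat_of_ord j < k)%N then b j else a j.

Lemma mixp0 n (a b : pt n.+1) : mixp a b 0 = a.
Proof. by apply functional_extensionality. Qed.
Lemma mixpn n (a b : pt n.+1) : mixp a b n.+1 = b.
Proof. apply functional_extensionality => j; by rewrite /mixp ltn_ord. Qed.
Lemma mixpS n (a b : pt n.+1) k : (k < n.+1)%N ->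
  mixp a b k.+1 = upd (mixp a b k) (inord k) (b (inord k)).
Proof.
move=> hk. apply functional_extensionality => j; rewrite /mixp /upd.
have e : (j == inord k :> 'I_n.+1) = (nat_of_ord j == k).
  apply/eqP/eqP => [->|e]; first by rewrite inordK.
  apply: val_inj => /=. by rewrite inordK.
rewrite e ltnS leq_eqVlt. case: eqP => [ejk|] //=.
congr (b _); apply: val_inj => /=; by rewrite inordK.
Qed.
Lemma mixp_k n (a b : pt n.+1) k : (k < n.+1)%N -> mixp a b k (inord k) = a (inord k).
Proof. move=> hk; by rewrite /mixp inordK // ltnn. Qed.

Section Frechet.
Variables (n : nat) (V : pt n.+1 -> Prop) (g : pt n.+1 -> R) (gp : 'I_n.+1 -> pt n.+1 -> R).
Hypotheses (HV : is_open V) (Hp : forall j y, V y -> partial_is g j y (gp j y))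
  (Hc : forall j, cont_on V (gp j)).

Lemma frechet y0 : V y0 -> forall eps, eps > 0 -> exists d, d > 0 /\
  forall b : pt n.+1, (forall i, Rabs (b i - y0 i) < d) ->
  Rabs (g b - g y0 - sm n.+1 (fun k => gp (inord k) y0 * (b (inord k) - y0 (inord k))))
    <= eps * sm n.+1 (fun k => Rabs (b (inord k) - y0 (inord k))).
Proof.
move=> Vy0 eps he.
case: (HV y0 Vy0) => d0 [hd0 Hd0].
have [d1 [hd1 Hd1]] : exists d, d > 0 /\ forall k, (k < n.+1)%N ->
   forall y, V y -> (forall i, Rabs (y i - y0 i) < d) -> Rabs (gp (inord k) y - gp (inord k) y0) < eps.
  apply fin_delta.
  - move=> i d d' hd H y Vy Hy. apply H => // j. have := Hy j; lra.
  - move=> i hi. case: (Hc (inord i) y0 Vy0 eps he) => d [hd Hd]. exists d; split => //.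
exists (Rmin d0 d1); split; first by apply Rmin_pos.
move=> b Hb.
have Hb0 : forall i, Rabs (b i - y0 i) < d0 by move=> i; apply: Rlt_le_trans (Hb i) (Rmin_l _ _).
have Hb1 : forall i, Rabs (b i - y0 i) < d1 by move=> i; apply: Rlt_le_trans (Hb i) (Rmin_r _ _).
have near : forall y : pt n.+1, (forall i, y i = b i \/ y i = y0 i \/
     Rabs (y i - y0 i) <= Rabs (b i - y0 i)) -> forall i, Rabs (y i - y0 i) <= Rabs (b i - y0 i).
  move=> y H i. case: (H i) => [->|[->|]] //; first lra.
  rewrite Rminus_diag Rabs_R0; apply Rabs_pos.
suff : forall k, (k <= n.+1)%N ->
  Rabs (g (mixp y0 b k) - g y0 - sm k (fun k => gp (inord k) y0 * (b (inord k) - y0 (inord k))))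
    <= eps * sm k (fun k => Rabs (b (inord k) - y0 (inord k))).
  by move/(_ n.+1 (leqnn n.+1)); rewrite mixpn.
elim => [|k IH] hk /=.
  rewrite mixp0. replace (g y0 - g y0 - 0) with 0 by ring. rewrite Rabs_R0; lra.
have hk' : (k < n.+1)%N by [].
have {}IH := IH (ltnW hk').
set m := mixp y0 b k.
have hmk : m (inord k) = y0 (inord k) by rewrite /m mixp_k.
have step : Rabs (g (mixp y0 b k.+1) - g m - gp (inord k) y0 * (b (inord k) - y0 (inord k)))
    <= eps * Rabs (b (inord k) - y0 (inord k)).
  rewrite mixpS // -(mixp_k _ y0 b _ hk') -/m.
  have -> : g m = g (upd m (inord k) (m (inord k))) by rewrite upd_id.
  apply mvt_bound with (f := fun t => g (upd m (inord k) t))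
     (f' := fun t => gp (inord k) (upd m (inord k) t)).
  - move=> c hc. have Vc : V (upd m (inord k) c).
      apply Hd0 => i. rewrite /upd. case: eqP => [->|_].
      + rewrite hmk in hc. apply: Rle_lt_trans (Hb0 (inord k)).
        move: hc; rewrite /Rmin /Rmax; repeat case: Rle_dec; move=> *;
        apply Rabs_le; split_Rabs; lra.
      + rewrite /m /mixp. case: (_ < _)%N => //. rewrite Rminus_diag Rabs_R0; lra.
    have := Hp (inord k) _ Vc.
    have E : (fun t => g (upd (upd m (inord k) c) (inord k) t)) = (fun t => g (upd m (inord k) t)) by apply functional_extensionality => t; rewrite upd_upd.
    by rewrite /partial_is E upd_same.
  - move=> c hc. have Vc : forall i, Rabs (upd m (inord k) c i - y0 i) < d0 /\ Rabs (upd m (inord k) c i - y0 i) < d1.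
      move=> i. rewrite /upd. case: eqP => [->|_].
      + rewrite hmk in hc. 
        have : Rabs (c - y0 (inord k)) <= Rabs (b (inord k) - y0 (inord k)).
          move: hc; rewrite /Rmin /Rmax; repeat case: Rle_dec; move=> *;
          apply Rabs_le; split_Rabs; lra.
        have := Hb0 (inord k); have := Hb1 (inord k); lra.
      + rewrite /m /mixp. case: (_ < _)%N => //. rewrite Rminus_diag Rabs_R0; lra.
    apply Rlt_le, Hd1 => //; last by move=> i; case: (Vc i).
    apply Hd0 => i; by case: (Vc i).
replace (g (mixp y0 b k.+1) - g y0 - (sm k (fun k0 : nat => gp (inord k0) y0 * (b (inord k0) - y0 (inord k0))) + gp (inord k) y0 * (b (inord k) - y0 (inord k))))
  with ((g m - g y0 - sm k (fun k0 : nat => gp (inord k0) y0 * (b (inord k0) - y0 (inord k0)))) + (g (mixp y0 b k.+1) - g m - gp (inord k) y0 * (b (inord k) - y0 (inord k)))) by (rewrite /m; ring).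
apply: Rle_trans (Rabs_triang _ _) _. rewrite Rmult_plus_distr_l. rewrite /m in step *; lra.
Qed.

Lemma sm_mulr k f c : sm k f * c = sm k (fun i => f i * c).
Proof. elim: k => [|k IH] /=; [ring| rewrite -IH; ring]. Qed.
Lemma sm_minus k f f2 : sm k f - sm k f2 = sm k (fun i => f i - f2 i).
Proof. elim: k => [|k IH] /=; [ring| rewrite -IH; ring]. Qed.

Lemma chain (phi : R -> pt n.+1) t0 (dphi : nat -> R) : V (phi t0) ->
  (forall k, (k < n.+1)%N -> derivable_pt_lim (fun t => phi t (inord k)) t0 (dphi k)) ->
  derivable_pt_lim (fun t => g (phi t)) t0 (sm n.+1 (fun k => gp (inord k) (phi t0) * dphi k)).
Proof.
move=> Vy0 Hphi. apply dlin_dpl => eps he.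
set y0 := phi t0.
set A := sm n.+1 (fun k => Rabs (dphi k) + 1).
set B := sm n.+1 (fun k => Rabs (gp (inord k) y0)).
have hA : 0 <= A by apply sm_nonneg => j _; have := Rabs_pos (dphi j); lra.
have hB : 0 <= B by apply sm_nonneg => j _; apply Rabs_pos.
have he1 : eps / (2 * (A + 1)) > 0 by apply Rdiv_lt_0_compat; lra.
case: (frechet _ Vy0 _ he1) => d1 [hd1 Hd1].
set e2 := Rmin 1 (eps / (2 * (B + 1))).
have he2 : e2 > 0 by apply Rmin_pos; [lra| apply Rdiv_lt_0_compat; lra].
have [d2 [hd2 Hd2]] : exists d, d > 0 /\ forall k, (k < n.+1)%N -> forall h, Rabs h < d ->
   Rabs (phi (t0 + h) (inord k) - phi t0 (inord k) - dphi k * h) <= e2 * Rabs h.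
  apply fin_delta.
  - move=> i d d' hd H h hh. apply H. lra.
  - move=> i hi. case: (dpl_dlin _ _ _ (Hphi i hi) _ he2) => d [hd Hd]. by exists d.
have hd1' : d1 / (A + 1) > 0 by apply Rdiv_lt_0_compat; lra.
exists (Rmin d2 (d1 / (A + 1))); split; first by apply Rmin_pos.
move=> h hh.
have hh2 : Rabs h < d2 by apply: Rlt_le_trans hh (Rmin_l _ _).
have hh1 : Rabs h * (A + 1) < d1.
  have := Rlt_le_trans _ _ _ hh (Rmin_r _ _).
  move=> H. have := Rmult_lt_compat_r (A + 1) _ _ ltac:(lra) H.
  by rewrite /Rdiv Rmult_assoc Rinv_l ?Rmult_1_r; last lra.
have e2le1 : e2 <= 1 by apply Rmin_l.
have Hk : forall k, (k < n.+1)%N ->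
    Rabs (phi (t0 + h) (inord k) - y0 (inord k)) <= (Rabs (dphi k) + 1) * Rabs h.
  move=> k hk. have := Hd2 k hk h hh2. rewrite -/y0.
  have := Rabs_triang (phi (t0 + h) (inord k) - y0 (inord k) - dphi k * h) (dphi k * h).
  rewrite Rabs_mult. replace (phi (t0 + h) (inord k) - y0 (inord k) - dphi k * h + dphi k * h)
    with (phi (t0 + h) (inord k) - y0 (inord k)) by ring.
  have := Rabs_pos h. nra.
have Hb : forall i, Rabs (phi (t0 + h) i - y0 i) < d1.
  move=> i. rewrite -(inord_val i). apply: Rle_lt_trans (Hk _ (ltn_ord i)) _.
  apply: Rle_lt_trans hh1.
  have : Rabs (dphi i) + 1 <= A.
    apply (sm_term n.+1 (fun k => Rabs (dphi k) + 1)) => //. move=> j _; have := Rabs_pos (dphi j); lra.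
  have := Rabs_pos h. nra.
have F := Hd1 _ Hb. rewrite -/y0.
set b := phi (t0 + h) in F Hk *.
set S1 := sm n.+1 (fun k => gp (inord k) y0 * (b (inord k) - y0 (inord k))) in F.
replace (g b - g y0 - sm n.+1 (fun k => gp (inord k) y0 * dphi k) * h)
  with ((g b - g y0 - S1) + sm n.+1 (fun k => gp (inord k) y0 * (b (inord k) - y0 (inord k) - dphi k * h))); last first.
  rewrite /S1 sm_mulr. have := sm_minus n.+1 (fun k => gp (inord k) y0 * (b (inord k) - y0 (inord k))) (fun i => gp (inord i) y0 * dphi i * h).
  have -> : sm n.+1 (fun i : nat => gp (inord i) y0 * (b (inord i) - y0 (inord i)) - gp (inord i) y0 * dphi i * h) = 
   sm n.+1 (fun k : nat => gp (inord k) y0 * (b (inord k) - y0 (inord k) - dphi k * h)) by apply sm_ext => i _; ring.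
  move=> <-; ring.
apply: Rle_trans (Rabs_triang _ _) _.
have P1 : eps / (2 * (A + 1)) * sm n.+1 (fun k => Rabs (b (inord k) - y0 (inord k))) <= eps / 2 * Rabs h.
  have : sm n.+1 (fun k => Rabs (b (inord k) - y0 (inord k))) <= A * Rabs h.
    rewrite /A sm_mulr. apply sm_le => i hi. exact: Hk.
  have : eps / (2 * (A + 1)) * (A + 1) = eps / 2 by field; lra.
  have := Rabs_pos h. 
  have : 0 <= sm n.+1 (fun k => Rabs (b (inord k) - y0 (inord k))) by apply sm_nonneg => j _; apply Rabs_pos.
  nra.
have P2 : Rabs (sm n.+1 (fun k => gp (inord k) y0 * (b (inord k) - y0 (inord k) - dphi k * h))) <= eps / 2 * Rabs h.
  apply: Rle_trans (sm_abs _ _) _.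
  have : sm n.+1 (fun i => Rabs (gp (inord i) y0 * (b (inord i) - y0 (inord i) - dphi i * h))) <= B * (e2 * Rabs h).
    rewrite /B sm_mulr. apply sm_le => i hi. rewrite Rabs_mult. apply Rmult_le_compat_l; first by apply Rabs_pos.
    exact: Hd2.
  have X0 : e2 <= eps / (2 * (B + 1)) by apply Rmin_r.
  have hq : 0 < eps / (2 * (B + 1)) by apply Rdiv_lt_0_compat; lra.
  have X1 : B * (e2 * Rabs h) <= B * (eps / (2 * (B + 1)) * Rabs h).
    apply Rmult_le_compat_l => //; apply Rmult_le_compat_r => //; apply Rabs_pos.
  have X2 : B * (eps / (2 * (B + 1)) * Rabs h) <= eps / (2 * (B + 1)) * (B + 1) * Rabs h.
    have := Rabs_pos h. nra.
  have E : eps / (2 * (B + 1)) * (B + 1) = eps / 2 by field; lra.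
  rewrite E in X2. lra.
rewrite -/y0 in F. lra.
Qed.

End Frechet.



Section Cont.
Variables (n : nat) (U : pt n -> Prop).

Lemma cont_const c : cont_on U (fun _ => c).
Proof. move=> x _ eps he. exists 1; split; first lra. move=> *; rewrite Rminus_diag Rabs_R0; lra. Qed.

Lemma cont_proj i : cont_on U (fun y => y i).
Proof. move=> x _ eps he. exists eps; split => // y _ H; exact: H. Qed.

Lemma cont_plus f g : cont_on U f -> cont_on U g -> cont_on U (fun y => f y + g y).
Proof.
move=> Hf Hg x Ux eps he. have he2 : eps / 2 > 0 by lra.
case: (Hf x Ux _ he2) => d1 [hd1 H1]. case: (Hg x Ux _ he2) => d2 [hd2 H2].
exists (Rmin d1 d2); split; first by apply Rmin_pos.
move=> y Uy Hy.
have := H1 y Uy (fun i => Rlt_le_trans _ _ _ (Hy i) (Rmin_l _ _)).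
have := H2 y Uy (fun i => Rlt_le_trans _ _ _ (Hy i) (Rmin_r _ _)).
move=> A B. replace (f y + g y - (f x + g x)) with ((f y - f x) + (g y - g x)) by ring.
apply: Rle_lt_trans (Rabs_triang _ _) _. lra.
Qed.

Lemma cont_mult f g : cont_on U f -> cont_on U g -> cont_on U (fun y => f y * g y).
Proof.
move=> Hf Hg x Ux eps he.
set K := Rabs (f x) + Rabs (g x) + 1.
have hK : K > 0 by rewrite /K; have := Rabs_pos (f x); have := Rabs_pos (g x); lra.
set e := Rmin 1 (eps / (2 * K)).
have he' : e > 0 by apply Rmin_pos; [lra| apply Rdiv_lt_0_compat; lra].
have e1 : e <= 1 by apply Rmin_l.
have e2 : e * K <= eps / 2.
  have : e <= eps / (2 * K) by apply Rmin_r.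
  have : eps / (2 * K) * K = eps / 2 by field; lra. nra.
case: (Hf x Ux _ he') => d1 [hd1 H1]. case: (Hg x Ux _ he') => d2 [hd2 H2].
exists (Rmin d1 d2); split; first by apply Rmin_pos.
move=> y Uy Hy.
have A := H1 y Uy (fun i => Rlt_le_trans _ _ _ (Hy i) (Rmin_l _ _)).
have B := H2 y Uy (fun i => Rlt_le_trans _ _ _ (Hy i) (Rmin_r _ _)).
replace (f y * g y - f x * g x) with ((f y - f x) * (g y - g x) + f x * (g y - g x) + g x * (f y - f x)) by ring.
apply: Rle_lt_trans (Rabs_triang _ _) _.
have := Rabs_triang ((f y - f x) * (g y - g x)) (f x * (g y - g x)).
rewrite !Rabs_mult.
have := Rabs_pos (f x); have := Rabs_pos (g x); have := Rabs_pos (f y - f x); have := Rabs_pos (g y - g x).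
rewrite /K in e2. nra.
Qed.

Lemma cont_inv f : (forall x, U x -> f x <> 0) -> cont_on U f -> cont_on U (fun y => / f y).
Proof.
move=> Hnz Hf x Ux eps he.
have hf : Rabs (f x) > 0 by apply Rabs_pos_lt, Hnz.
set e := Rmin (Rabs (f x) / 2) (eps * (Rabs (f x) * Rabs (f x)) / 2).
have hff := Rmult_lt_0_compat _ _ hf hf.
have he' : e > 0 by rewrite /e; apply Rmin_pos; apply Rdiv_lt_0_compat; nra.
case: (Hf x Ux _ he') => d [hd H].
exists d; split => // y Uy Hy.
have A := H y Uy Hy.
have A1 : Rabs (f y - f x) < Rabs (f x) / 2 by apply: Rlt_le_trans A (Rmin_l _ _).
have A2 : Rabs (f y - f x) < eps * (Rabs (f x) * Rabs (f x)) / 2 by apply: Rlt_le_trans A (Rmin_r _ _).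
have fy : Rabs (f y) > Rabs (f x) / 2.
  have := Rabs_triang_inv (f x) (f y). rewrite Rabs_minus_sym. lra.
have fy0 : f y <> 0 by move=> e0; rewrite e0 Rabs_R0 in fy; lra.
replace (/ f y - / f x) with ((f x - f y) * / (f y * f x)) by (field; split; auto).
rewrite Rabs_mult Rabs_inv Rabs_mult Rabs_minus_sym.
have hp : 0 < Rabs (f y) * Rabs (f x) by nra.
apply (Rmult_lt_reg_r (Rabs (f y) * Rabs (f x))) => //.
rewrite Rmult_assoc Rinv_l; last lra. rewrite Rmult_1_r.
have : eps * (Rabs (f x) * Rabs (f x)) / 2 <= eps * (Rabs (f y) * Rabs (f x)).
  have : Rabs (f x) * Rabs (f x) / 2 <= Rabs (f y) * Rabs (f x) by nra. nra.
lra.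
Qed.

End Cont.

Lemma dpl_ext (f g : R -> R) x l : (forall t, f t = g t) -> derivable_pt_lim f x l -> derivable_pt_lim g x l.
Proof. move=> H. apply: (dpl_local f g x l 1); [lra| by move=> *]. Qed.

Section Ck.
Variables (n : nat) (U : pt n -> Prop).

Lemma Ck_cont k f : Ck k U f -> cont_on U f.
Proof. by case: k => [|k] //= [] . Qed.

Lemma Ck_down k f : Ck k.+1 U f -> Ck k U f.
Proof.
elim: k f => [|k IH] f /=; first by case.
case=> hc H; split => // i. case: (H i) => g [hg Hg]. exists g; split => //. exact: IH.
Qed.

Lemma Ck_const k c : Ck k U (fun _ => c).
Proof.
elim: k c => [|k IH] c /=; first exact: cont_const.
split; first exact: cont_const.
move=> i; exists (fun _ => 0); split => //. move=> x _. exact: derivable_pt_lim_const.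
Qed.

Lemma Ck_proj k i : Ck k U (fun y => y i).
Proof.
case: k => [|k] /=; first exact: cont_proj.
split; first exact: cont_proj.
move=> j; exists (fun _ => if i == j then 1 else 0); split; last by apply Ck_const.
move=> x _. rewrite /partial_is /upd. case: eqP => [e|_]; first subst j.
- exact: derivable_pt_lim_id.
- exact: derivable_pt_lim_const.
Qed.

Lemma Ck_plus k f g : Ck k U f -> Ck k U g -> Ck k U (fun y => f y + g y).
Proof.
elim: k f g => [|k IH] f g /=; first exact: cont_plus.
case=> cf Hf [cg Hg]; split; first exact: cont_plus.
move=> i. case: (Hf i) => pf [hpf Cpf]. case: (Hg i) => pg [hpg Cpg].
exists (fun y => pf y + pg y); split; last exact: IH.
move=> x Ux. exact: (derivable_pt_lim_plus (fun t => f (upd x i t)) (fun t => g (upd x i t)) _ _ _ (hpf x Ux) (hpg x Ux)).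
Qed.

Lemma Ck_mult k f g : Ck k U f -> Ck k U g -> Ck k U (fun y => f y * g y).
Proof.
elim: k f g => [|k IH] f g /=; first exact: cont_mult.
move=> Cf' Cg'. have Cf := Ck_down k f Cf'. have Cg := Ck_down k g Cg'.
case: Cf' => cf Hf; case: Cg' => cg Hg; split; first exact: cont_mult.
move=> i. case: (Hf i) => pf [hpf Cpf]. case: (Hg i) => pg [hpg Cpg].
exists (fun y => pf y * g y + f y * pg y); split; last by apply Ck_plus; apply IH.
move=> x Ux. have := derivable_pt_lim_mult (fun t => f (upd x i t)) (fun t => g (upd x i t)) _ _ _ (hpf x Ux) (hpg x Ux).
by rewrite /= upd_id.
Qed.

Lemma Ck_inv k f : (forall x, U x -> f x <> 0) -> Ck k U f -> Ck k U (fun y => / f y).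
Proof.
move=> Hnz. elim: k f Hnz => [|k IH] f Hnz /=; first exact: cont_inv.
move=> Cf'. have Cf := Ck_down k f Cf'.
case: Cf' => cf Hf; split; first exact: cont_inv.
move=> i. case: (Hf i) => pf [hpf Cpf].
exists (fun y => (-1 * pf y) * (/ f y * / f y)); split.
- move=> x Ux. have := derivable_pt_lim_div (fun _ => 1) (fun t => f (upd x i t)) (x i) 0 (pf x)
     (derivable_pt_lim_const 1 _) (hpf x Ux).
  rewrite /= upd_id => H.
  have {}H := H (Hnz x Ux).
  rewrite /partial_is. 
  have -> : (-1 * pf x * (/ f x * / f x)) = ((0 * f x - pf x * 1) / (f x)²) by rewrite /Rsqr; field; apply Hnz.
  apply: dpl_ext H => t /=. rewrite /div_fct /Rdiv; ring.
- apply Ck_mult; first by apply Ck_mult => //; apply Ck_const.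
  by apply Ck_mult; apply IH.
Qed.

Lemma Ck_sm k m (F : nat -> pt n -> R) : (forall j, (j < m)%N -> Ck k U (F j)) ->
  Ck k U (fun x => sm m (fun j => F j x)).
Proof.
elim: m => [|m IH] H /=; first exact: Ck_const.
apply Ck_plus; first by apply IH => j hj; apply H; exact: ltnW.
exact: H.
Qed.

End Ck.



Section Comp.
Variables (n m : nat) (U : pt n -> Prop) (V : pt m.+1 -> Prop) (phi : pt n -> pt m.+1).
Hypotheses (HV : is_open V) (HUV : forall x, U x -> V (phi x))
  (Hphi : forall j, smooth_on U (fun x => phi x j)).

Lemma cont_comp g : cont_on V g -> cont_on U (fun x => g (phi x)).
Proof.
move=> Hg x Ux eps he. case: (Hg _ (HUV x Ux) eps he) => d [hd Hd].
have [d' [hd' Hd']] : exists d', d' > 0 /\ forall k, (k < m.+1)%N -> forall y, U y ->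
    (forall i, Rabs (y i - x i) < d') -> Rabs (phi y (inord k) - phi x (inord k)) < d.
  apply fin_delta.
  - move=> i a b hab H y Uy Hy. apply H => // j. have := Hy j; lra.
  - move=> i hi. have C := Hphi (inord i) 0%nat. case: (C x Ux d hd) => e [he' He]. by exists e.
exists d'; split => // y Uy Hy. apply Hd; first exact: HUV.
move=> i. rewrite -(inord_val i). exact: Hd'.
Qed.

Lemma Ck_comp k g : Ck k V g -> Ck k U (fun x => g (phi x)).
Proof.
elim: k g => [|k IH] g /=; first exact: cont_comp.
case=> cg Hg. split; first exact: cont_comp.
move=> i.
have [gp Hgp] := functional_choice _ Hg.
have [p Hp] : exists p : 'I_m.+1 -> pt n -> R, forall j,
    (forall x, U x -> partial_is (fun x => phi x j) i x (p j x)) /\ Ck k U (p j).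
  apply (functional_choice (fun j q => (forall x, U x -> partial_is (fun x => phi x j) i x (q x)) /\ Ck k U q)) => j. case: (Hphi j k.+1) => _ H. exact: H i.
exists (fun x => sm m.+1 (fun l => gp (inord l) (phi x) * p (inord l) x)); split.
- move=> x Ux. rewrite /partial_is.
  have H := chain _ V g gp HV (fun j y Vy => proj1 (Hgp j) y Vy)
     (fun j => Ck_cont _ _ _ _ (proj2 (Hgp j))) (fun t => phi (upd x i t)) (x i) (fun l => p (inord l) x).
  rewrite upd_id in H. apply H; first exact: HUV.
  move=> l hl. exact: (proj1 (Hp (inord l)) x Ux).
- apply Ck_sm => l hl. apply Ck_mult; last exact: (proj2 (Hp _)).
  apply IH. exact: (proj2 (Hgp _)).
Qed.
End Comp.



Lemma ordE n k (hk : (k < n.+1)%N) : Ordinal hk = inord k.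
Proof. apply: val_inj => /=. by rewrite inordK. Qed.

Lemma ord3_cases (P : 'I_3 -> Prop) : P (inord 0) -> P (inord 1) -> P (inord 2) -> forall i, P i.
Proof. move=> H0 H1 H2 [[|[|[|?]]] hi] //; by rewrite ordE. Qed.
Lemma ord4_cases (P : 'I_4 -> Prop) : P (inord 0) -> P (inord 1) -> P (inord 2) -> P (inord 3) -> forall i, P i.
Proof. move=> H0 H1 H2 H3 [[|[|[|[|?]]]] hi] //; by rewrite ordE. Qed.
Lemma ord6_cases (P : 'I_6 -> Prop) : P (inord 0) -> P (inord 1) -> P (inord 2) -> P (inord 3) ->
  P (inord 4) -> P (inord 5) -> forall i, P i.
Proof. move=> H0 H1 H2 H3 H4 H5 [[|[|[|[|[|[|?]]]]]] hi] //; by rewrite ordE. Qed.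

Lemma inord_eqE n a b : (a < n.+1)%N -> (b < n.+1)%N -> (inord a == inord b :> 'I_n.+1) = (a == b).
Proof.
move=> ha hb. apply/eqP/eqP => [e|->] //.
by rewrite -(inordK ha) -(inordK hb) e.
Qed.

Lemma dpl_eq {f g : R -> R} {x l l'} : derivable_pt_lim f x l -> (forall t, f t = g t) -> l = l' ->
  derivable_pt_lim g x l'.
Proof. move=> D H <-; exact: dpl_ext D. Qed.

Lemma dupd n (x : pt n) i j : derivable_pt_lim (fun t => upd x i t j) (x i) (if j == i then 1 else 0).
Proof.
rewrite /upd. case: (j == i).
- exact: derivable_pt_lim_id.
- exact: derivable_pt_lim_const.
Qed.

Definition psi (x : pt 6) : pt 4 := join4 (gam_of x) (dot3 (M_of x) (gam_of x)).

Definition dl (i : 'I_6) (k : nat) : R := if (inord k == i) then 1 else 0.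

Definition dpsi (x : pt 6) (i : 'I_6) (l : nat) : R :=
  match l with
  | 0 => dl i 3 | 1 => dl i 4 | 2 => dl i 5
  | _ => dl i 0 * x (inord 3) + x (inord 0) * dl i 3 + (dl i 1 * x (inord 4) + x (inord 1) * dl i 4)
         + (dl i 2 * x (inord 5) + x (inord 2) * dl i 5)
  end.

Lemma psi_eval (y : pt 6) :
  psi y (inord 0) = y (inord 3) /\ psi y (inord 1) = y (inord 4) /\ psi y (inord 2) = y (inord 5) /\
  psi y (inord 3) = y (inord 0) * y (inord 3) + y (inord 1) * y (inord 4) + y (inord 2) * y (inord 5).
Proof.
rewrite /psi /join4 /dot3 /c0 /c1 /c2 /gam_of /M_of /v3 !inordK //.
Qed.

Lemma dpsi_ok x i l : (l < 4)%N ->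
  derivable_pt_lim (fun t => psi (upd x i t) (inord l)) (x i) (dpsi x i l).
Proof.
case: l => [|[|[|[|?]]]] // _.
- apply: (dpl_eq (dupd _ x i (inord 3))) => //. move=> t; by case: (psi_eval (upd x i t)).
- apply: (dpl_eq (dupd _ x i (inord 4))) => //. move=> t; by case: (psi_eval (upd x i t)) => _ [].
- apply: (dpl_eq (dupd _ x i (inord 5))) => //. move=> t; by case: (psi_eval (upd x i t)) => _ [_ []].
- have H := derivable_pt_lim_plus _ _ _ _ _ (derivable_pt_lim_plus _ _ _ _ _
     (derivable_pt_lim_mult _ _ _ _ _ (dupd _ x i (inord 0)) (dupd _ x i (inord 3)))
     (derivable_pt_lim_mult _ _ _ _ _ (dupd _ x i (inord 1)) (dupd _ x i (inord 4))))
     (derivable_pt_lim_mult _ _ _ _ _ (dupd _ x i (inord 2)) (dupd _ x i (inord 5))).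
  apply: (dpl_eq H).
  + move=> t. case: (psi_eval (upd x i t)) => _ [_ [_ ->]]. by [].
  + rewrite /= !upd_id /dpsi /dl. by [].
Qed.

Definition G (x : pt 6) (dF : pt 4) (i : 'I_6) : R := sm 4 (fun l => dF (inord l) * dpsi x i l).

Ltac ev := rewrite /mulv6 /Pi /G /dpsi /dl /cross3 /gam4 /gam_of /M_of /c0 /c1 /c2 /v3 /sm;
  rewrite ?inordK // ?inord_eqE //=.

Lemma alg_rows x dF (nuv : pt 3) :
 (forall r, (r < 3)%N -> mulv6 (Pi (M_of x) (gam_of x) nuv) (G x dF) (inord r) =
    - cross3 (gam_of x) (fun k => dF (inord 3) * nuv k - gam4 dF k) (inord r)) /\
 (forall r, (3 <= r < 6)%N -> mulv6 (Pi (M_of x) (gam_of x) nuv) (G x dF) (inord r) = 0).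
Proof.
split.
- case=> [|[|[|?]]] // _; ev; ring.
- case=> [|[|[|[|[|[|?]]]]]] // _; ev; ring.
Qed.

Definition nrm (y : pt 4) := y (inord 0) * y (inord 0) + y (inord 1) * y (inord 1) + y (inord 2) * y (inord 2).
Definition chi (y : pt 4) : pt 6 := fun j =>
  match nat_of_ord j with
  | 0 => y (inord 3) * / nrm y * y (inord 0)
  | 1 => y (inord 3) * / nrm y * y (inord 1)
  | 2 => y (inord 3) * / nrm y * y (inord 2)
  | 3 => y (inord 0) | 4 => y (inord 1) | _ => y (inord 2) end.

Lemma gam_chi y : gam_of (chi y) = gam4 y.
Proof.
apply functional_extensionality; apply ord3_cases; by rewrite /gam_of /gam4 /v3 /chi !inordK.
Qed.

Lemma gam4_psi x : gam4 (psi x) = gam_of x.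
Proof.
apply functional_extensionality; apply ord3_cases; rewrite /gam4 /v3 !inordK //;
case: (psi_eval x) => [e0 [e1 [e2 _]]]; rewrite ?e0 ?e1 ?e2; by rewrite /gam_of /v3 !inordK.
Qed.

Lemma psi_chi y : nrm y <> 0 -> psi (chi y) = y.
Proof.
move=> hn. apply functional_extensionality; apply ord4_cases;
case: (psi_eval (chi y)) => [e0 [e1 [e2 e3]]]; rewrite ?e0 ?e1 ?e2 ?e3 /chi !inordK //.
rewrite /nrm in hn *. field. exact: hn.
Qed.

Section Dset.
Variable D : pt 3 -> Prop.
Hypotheses (HD : is_open D) (HD0 : forall g, D g -> ~ (forall i, g i = 0)).

Lemma open_Omega : is_open (Omega D).
Proof.
move=> x Dx. case: (HD _ Dx) => d [hd Hd]. exists d; split => // y Hy.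
apply Hd; apply ord3_cases; rewrite /gam_of /v3 !inordK //; apply Hy.
Qed.

Lemma open_DxR : is_open (DxR D).
Proof.
move=> x Dx. case: (HD _ Dx) => d [hd Hd]. exists d; split => // y Hy.
apply Hd; apply ord3_cases; rewrite /gam4 /v3 !inordK //; apply Hy.
Qed.

Lemma nrm_nz y : DxR D y -> nrm y <> 0.
Proof.
move=> Dy hn. apply: (HD0 _ Dy). rewrite /nrm in hn.
have h0 : y (inord 0) = 0 by nra.
have h1 : y (inord 1) = 0 by nra.
have h2 : y (inord 2) = 0 by nra.
apply ord3_cases; by rewrite /gam4 /v3 !inordK.
Qed.

Lemma nrm_Ck k : Ck k (DxR D) nrm.
Proof. by rewrite /nrm; repeat apply Ck_plus; apply Ck_mult; apply Ck_proj. Qed.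

Lemma chi_smooth j : smooth_on (DxR D) (fun y => chi y j).
Proof.
move: j; apply ord6_cases => k; rewrite /chi inordK //;
  try (apply Ck_mult; [apply Ck_mult; [apply Ck_proj| apply Ck_inv; [exact: nrm_nz| exact: nrm_Ck]]| apply Ck_proj]);
  apply Ck_proj.
Qed.

End Dset.



Lemma upd_near n (U : pt n -> Prop) x i : is_open U -> U x ->
  exists d, d > 0 /\ forall t, Rabs (t - x i) < d -> U (upd x i t).
Proof.
move=> HU Ux. case: (HU x Ux) => d [hd Hd]. exists d; split => // t ht.
apply Hd => j. rewrite /upd. case: eqP => [->|_] //. rewrite Rminus_diag Rabs_R0; lra.
Qed.

Section Main.
Variables (D : pt 3 -> Prop) (nu : pt 4 -> pt 3).
Hypotheses (HD : is_open D) (HD0 : forall g, D g -> ~ (forall i, g i = 0)).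

Lemma grad_psi F Fp : (forall j y, DxR D y -> partial_is F j y (Fp j y)) ->
  (forall j, cont_on (DxR D) (Fp j)) -> forall C x, Omega D x ->
  (forall x', Omega D x' -> C x' = F (psi x')) ->
  forall i, partial_is C i x (G x (fun j => Fp j (psi x)) i).
Proof.
move=> HFp HFc C x Ox HCF i.
have H := chain _ (DxR D) F Fp (open_DxR D HD) HFp HFc (fun t => psi (upd x i t)) (x i) (dpsi x i).
rewrite upd_id in H.
have {}H := H ltac:(by rewrite /DxR gam4_psi) (fun l hl => dpsi_ok x i l hl).
case: (upd_near _ (Omega D) x i (open_Omega D HD) Ox) => d [hd Hd].
apply: (dpl_local _ _ _ _ d hd _ H) => t ht. by rewrite HCF //; apply Hd.
Qed.

Lemma backward F C : Ck 1 (DxR D) F ->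
  (forall x, Omega D x -> C x = F (psi x)) ->
  (forall y, DxR D y -> forall dF : pt 4, (forall j, partial_is F j y (dF j)) ->
     forall i : 'I_3, cross3 (gam4 y) (fun k => dF (inord 3) * nu y k - gam4 dF k) i = 0) ->
  casimir D nu C.
Proof.
move=> [_ HF1] HCF Hcross x Ox gradC HgC.
have [Fp HFp] := functional_choice _ HF1.
have P := grad_psi F Fp (fun j => proj1 (HFp j)) (fun j => proj2 (HFp j)) C x Ox HCF.
set dF := fun j => Fp j (psi x) in P.
have -> : gradC = G x dF.
  apply functional_extensionality => i. exact: uniqueness_limite (HgC i) (P i).
have Dy : DxR D (psi x) by rewrite /DxR gam4_psi.
have Hc := Hcross (psi x) Dy dF (fun j => proj1 (HFp j) _ Dy).
rewrite gam4_psi in Hc.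
case: (alg_rows x dF (mu_of nu x)) => A1 A2.
apply ord6_cases; [rewrite A1 // Hc; lra| rewrite A1 // Hc; lra| rewrite A1 // Hc; lra| by rewrite A2| by rewrite A2| by rewrite A2].
Qed.
End Main.

Definition seg (x y : pt 6) (t : R) : pt 6 := fun j => x j + t * (y j - x j).

Lemma lin_dpl a b t0 : derivable_pt_lim (fun t => a + t * b) t0 b.
Proof.
have H := derivable_pt_lim_plus _ _ t0 _ _ (derivable_pt_lim_const a t0)
   (derivable_pt_lim_mult _ _ t0 _ _ (derivable_pt_lim_id t0) (derivable_pt_lim_const b t0)).
apply: (dpl_eq H) => //=. rewrite /fct_cte /id; ring.
Qed.

Section Forward.
Variables (D : pt 3 -> Prop) (nu : pt 4 -> pt 3).
Hypotheses (HD : is_open D) (HD0 : forall g, D g -> ~ (forall i, g i = 0)).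

Lemma const_plane C Cp : (forall j y, Omega D y -> partial_is C j y (Cp j y)) ->
  (forall j, cont_on (Omega D) (Cp j)) -> casimir D nu C ->
  forall x, Omega D x -> C x = C (chi (psi x)).
Proof.
move=> HCp HCc Hcas x Ox.
set y := chi (psi x).
have Dp : DxR D (psi x) by rewrite /DxR gam4_psi.
have N0 := nrm_nz D HD0 _ Dp.
case: (psi_eval x) => [p0 [p1 [p2 p3]]].
rewrite /nrm p0 p1 p2 in N0.
have y0 : y (inord 0) = psi x (inord 3) * / nrm (psi x) * x (inord 3) by rewrite /y /chi inordK // p0.
have y1 : y (inord 1) = psi x (inord 3) * / nrm (psi x) * x (inord 4) by rewrite /y /chi inordK // p1.
have y2 : y (inord 2) = psi x (inord 3) * / nrm (psi x) * x (inord 5) by rewrite /y /chi inordK // p2.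
have y3 : y (inord 3) = x (inord 3) by rewrite /y /chi inordK // p0.
have y4 : y (inord 4) = x (inord 4) by rewrite /y /chi inordK // p1.
have y5 : y (inord 5) = x (inord 5) by rewrite /y /chi inordK // p2.
rewrite /nrm p0 p1 p2 p3 in y0 y1 y2.
have gseg : forall t, gam_of (seg x y t) = gam_of x.
  move=> t. apply functional_extensionality; apply ord3_cases;
  rewrite /gam_of /v3 /seg !inordK // ?y3 ?y4 ?y5; ring.
have Oseg : forall t, Omega D (seg x y t) by move=> t; rewrite /Omega gseg.
have Dh : forall t, derivable_pt_lim (fun t => C (seg x y t)) t 0.
  move=> t.
  have H := chain _ (Omega D) C Cp (open_Omega D HD) HCp HCc (seg x y) t
     (fun l => y (inord l) - x (inord l)) (Oseg t) (fun l _ => lin_dpl _ _ t).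
  apply: (dpl_eq H) => //.
  have Hc := Hcas _ (Oseg t) (fun i => Cp i (seg x y t)) (fun i => HCp i _ (Oseg t)).
  set a0 := Cp (inord 0) (seg x y t). set a1 := Cp (inord 1) (seg x y t).
  set a2 := Cp (inord 2) (seg x y t).
  have e3 : - x (inord 5) * a1 + x (inord 4) * a2 = 0.
    apply: eq_trans (Hc (inord 3)). rewrite gseg. ev. rewrite /a1 /a2. ring.
  have e4 : x (inord 5) * a0 - x (inord 3) * a2 = 0.
    apply: eq_trans (Hc (inord 4)). rewrite gseg. ev. rewrite /a0 /a2. ring.
  have e5 : - x (inord 4) * a0 + x (inord 3) * a1 = 0.
    apply: eq_trans (Hc (inord 5)). rewrite gseg. ev. rewrite /a0 /a1. ring.
  rewrite /sm -/a0 -/a1 -/a2 y0 y1 y2 y3 y4 y5.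
  set N := x (inord 3) * x (inord 3) + x (inord 4) * x (inord 4) + x (inord 5) * x (inord 5) in N0 *.
  set s := x (inord 0) * x (inord 3) + x (inord 1) * x (inord 4) + x (inord 2) * x (inord 5).
  have -> : 0 + a0 * (s * / N * x (inord 3) - x (inord 0)) + a1 * (s * / N * x (inord 4) - x (inord 1)) +
      a2 * (s * / N * x (inord 5) - x (inord 2)) + Cp (inord 3) (seg x y t) * (x (inord 3) - x (inord 3)) +
      Cp (inord 4) (seg x y t) * (x (inord 4) - x (inord 4)) + Cp (inord 5) (seg x y t) * (x (inord 5) - x (inord 5))
    = / N * (- ((- x (inord 5) * a1 + x (inord 4) * a2) * (x (inord 4) * x (inord 2) - x (inord 5) * x (inord 1))
              + (x (inord 5) * a0 - x (inord 3) * a2) * (x (inord 5) * x (inord 0) - x (inord 3) * x (inord 2))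
              + (- x (inord 4) * a0 + x (inord 3) * a1) * (x (inord 3) * x (inord 1) - x (inord 4) * x (inord 0)))).
    rewrite /s /N. field. exact: N0.
  rewrite e3 e4 e5. ring.
have [c [hc _]] : exists c, C (seg x y 1) - C (seg x y 0) = 0 * (1 - 0) /\ 0 < c < 1.
  apply: (MVT_cor2 (fun t => C (seg x y t)) (fun _ => 0)); first lra.
  move=> c _; exact: Dh.
have s0 : seg x y 0 = x by apply functional_extensionality => j; rewrite /seg; ring.
have s1 : seg x y 1 = y by apply functional_extensionality => j; rewrite /seg; ring.
rewrite s0 s1 in hc. lra.
Qed.
End Forward.



Lemma cross_zero (g a : pt 3) : forall i, cross3 g (fun k => 0 * a k - g k) i = 0.
Proof. apply ord3_cases; rewrite /cross3 /c0 /c1 /c2 /v3 !inordK //; ring. Qed.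

Theorem mainTheorem2 (D : pt 3 -> Prop) (nu : pt 4 -> pt 3) :
  is_open D ->
  (forall g, D g -> ~ (forall i, g i = 0)) ->
  (forall k : 'I_3, smooth_on (DxR D) (fun y => nu y k)) ->
  (forall C : pt 6 -> R, smooth_on (Omega D) C ->
     (casimir D nu C <->
      exists F : pt 4 -> R, smooth_on (DxR D) F /\
        (forall x, Omega D x -> C x = F (join4 (gam_of x) (dot3 (M_of x) (gam_of x)))) /\
        (forall y, DxR D y -> forall dF : pt 4,
           (forall j, partial_is F j y (dF j)) ->
           forall i : 'I_3,
             cross3 (gam4 y)
               (fun k => dF (inord 3) * nu y k - gam4 dF k) i = 0)))
  /\ casimir D nu (fun x => / 2 * dot3 (gam_of x) (gam_of x)).
Proof.
move=> HD HD0 Hnu. split.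
- move=> C HC. split.
  + move=> Hcas.
    case: (HC 1%nat) => _ HC1.
    have [Cp HCp] := functional_choice _ HC1.
    have HCF : forall x, Omega D x -> C x = C (chi (psi x)).
      exact: (const_plane D nu HD HD0 C Cp (fun j => proj1 (HCp j)) (fun j => proj2 (HCp j)) Hcas).
    have HFs : smooth_on (DxR D) (fun y => C (chi y)).
      move=> k. apply: (Ck_comp _ _ (DxR D) (Omega D) chi) => //.
      * exact: open_Omega.
      * by move=> y Dy; rewrite /Omega gam_chi.
      * exact: chi_smooth.
    exists (fun y => C (chi y)). split => //. split => //.
    move=> y Dy dF HdF.
    case: (HFs 1%nat) => _ HF1.
    have [Fp HFp] := functional_choice _ HF1.
    set x := chi y.
    have Ox : Omega D x by rewrite /Omega gam_chi.
    have py : psi x = y by apply psi_chi; exact: nrm_nz D HD0 _ Dy.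
    have P := grad_psi D HD (fun y => C (chi y)) Fp (fun j => proj1 (HFp j)) (fun j => proj2 (HFp j)) C x Ox HCF.
    have edF : (fun j => Fp j (psi x)) = dF.
      apply functional_extensionality => j. rewrite py.
      exact: uniqueness_limite (proj1 (HFp j) y Dy) (HdF j).
    rewrite edF in P.
    have Hc := Hcas x Ox _ P.
    case: (alg_rows x dF (mu_of nu x)) => A1 _.
    have mx : mu_of nu x = nu y by rewrite /mu_of -py.
    have gx : gam_of x = gam4 y by rewrite /x gam_chi.
    rewrite mx gx in A1 Hc.
    apply ord3_cases.
    * have := A1 0%nat isT. rewrite Hc. lra.
    * have := A1 1%nat isT. rewrite Hc. lra.
    * have := A1 2%nat isT. rewrite Hc. lra.
  + case=> F [HF [HCF Hcross]].
    exact: (backward D nu HD F C (HF 1%nat) HCF Hcross).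
- set F1 := fun y => / 2 * nrm y.
  apply: (backward D nu HD F1).
  + apply Ck_mult; [apply Ck_const| apply nrm_Ck].
  + move=> x Ox. case: (psi_eval x) => [p0 [p1 [p2 _]]].
    rewrite /F1 /nrm p0 p1 p2 /dot3 /c0 /c1 /c2 /gam_of /v3 !inordK //.
  + move=> y Dy dF HdF.
    set dd := fun (j : 'I_4) k => if (inord k == j :> 'I_4) then 1 else 0.
    have HD1 : forall j, partial_is F1 j y
        (/ 2 * ((dd j 0%nat * y (inord 0) + y (inord 0) * dd j 0%nat)
          + (dd j 1%nat * y (inord 1) + y (inord 1) * dd j 1%nat)
          + (dd j 2%nat * y (inord 2) + y (inord 2) * dd j 2%nat))).
      move=> j.
      have H := derivable_pt_lim_scal _ (/ 2) _ _ (derivable_pt_lim_plus _ _ _ _ _ (derivable_pt_lim_plus _ _ _ _ _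
     (derivable_pt_lim_mult _ _ _ _ _ (dupd _ y j (inord 0)) (dupd _ y j (inord 0)))
     (derivable_pt_lim_mult _ _ _ _ _ (dupd _ y j (inord 1)) (dupd _ y j (inord 1))))
     (derivable_pt_lim_mult _ _ _ _ _ (dupd _ y j (inord 2)) (dupd _ y j (inord 2)))).
      apply: (dpl_eq H) => //. rewrite /= !upd_id. by [].
    have v : forall r, dF (inord r) = _ := fun r => uniqueness_limite _ _ _ _ (HdF (inord r)) (HD1 (inord r)).
    have d3 : dF (inord 3) = 0.
      rewrite v /dd !inord_eqE //=. ring.
    have gd : gam4 dF = gam4 y.
      apply functional_extensionality; apply ord3_cases; rewrite /gam4 /v3 !inordK // v /dd !inord_eqE //=; field.
    rewrite d3 gd. exact: cross_zero.
Qed.
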